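(* Let $c(x,\bar y)=\frac{\langle x,y\rangle}{y_{n+1}}$ for $x\in\mathbb{R}^n$, $\bar y=(y,y_{n+1})\in\mathbb{S}^n_-$. (1) A subset $\Omega^*\subset\mathbb{S}^n_-$ is $c^*$-convex with respect to any $\Omega\subset\mathbb{R}^n$ if and only if it is a geodesically convex subset of $\mathbb{S}^n_-$. (2) A subset $\Omega\subset\mathbb{R}^n$ is $c$-convex with respect to any $\Omega^*\subset\mathbb{S}^n_-$ if and only if it is a convex subset of $\mathbb{R}^n$.
   Context: $\mathbb{S}^n_-=\{\bar y\in\mathbb{S}^n\mid y_{n+1}<0\}$. $\Omega^*$ is $c^*$-convex with respect to $\Omega$ if for every $x\in\Omega$ the set $-D_xc(x,\Omega^* )=\{-y/y_{n+1}\mid\bar y\in\Omega^*\}$ is a convex subset of $\mathbb{R}^n$. $\Omega$ is $c$-convex with respect to $\Omega^*$ if for every $\bar y\in\Omega^*$ the set $-D_{\bar y}c(\Omega,\bar y)$ is a convex subset of the tangent space $T_{\bar y}\mathbb{S}^n$. Geodesically convex means any two points of the set are joined by a minimizing great-circle arc lying in the set. *)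

(* Defs.v *)
From HB Require Import structures.
From mathcomp Require Import all_boot all_order all_algebra.
From mathcomp Require Import all_classical all_reals all_analysis.
Set Implicit Arguments. Unset Strict Implicit. Unset Printing Implicit Defensive.
Import Order.TTheory GRing.Theory Num.Theory.
Import numFieldNormedType.Exports.
Local Open Scope classical_set_scope.
Local Open Scope ring_scope.

Section Defs.
Variables (R : realType) (n : nat).

Definition dotv (k : nat) (u v : 'rV[R]_k) : R := \sum_(i < k) u 0 i * v 0 i.

Definition yfst (yb : 'rV[R]_n.+1) : 'rV[R]_n :=
  \row_(i < n) yb 0 (widen_ord (leqnSn n) i).
Definition ylast (yb : 'rV[R]_n.+1) : R := yb 0 ord_max.

Definition sphere : set 'rV[R]_n.+1 := [set yb | dotv yb yb = 1].
Definition lower_hemisphere : set 'rV[R]_n.+1 :=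
  [set yb | sphere yb /\ ylast yb < 0].

Definition cost (x : 'rV[R]_n) (yb : 'rV[R]_n.+1) : R :=
  dotv x (yfst yb) / ylast yb.

Definition egrad (k : nat) (f : 'rV[R]_k -> R) (p : 'rV[R]_k) : 'rV[R]_k :=
  \row_(j < k) ('D_(delta_mx 0 j) f p).

Definition Dx_cost (x : 'rV[R]_n) (yb : 'rV[R]_n.+1) : 'rV[R]_n :=
  egrad (fun x' => cost x' yb) x.

(* D_ybar c(x, ybar): Riemannian gradient on S^n of ybar |-> c(x, ybar),
   i.e. the tangential projection (onto T_ybar S^n = ybar^perp) of the
   Euclidean gradient of the ambient expression <x,y>/y_{n+1}. *)
Definition Dy_cost (x : 'rV[R]_n) (yb : 'rV[R]_n.+1) : 'rV[R]_n.+1 :=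
  let g := egrad (fun yb' => cost x yb') yb in g - (dotv g yb) *: yb.

Definition convex_rV (k : nat) (A : set 'rV[R]_k) : Prop :=
  forall a b, A a -> A b -> forall t : R, 0 <= t <= 1 ->
    A ((1 - t) *: a + t *: b).

Definition cstar_convex (Om : set 'rV[R]_n) (Os : set 'rV[R]_n.+1) : Prop :=
  forall x, Om x -> convex_rV [set - Dx_cost x yb | yb in Os].

(* Omega is c-convex w.r.t. Omega* (the sets lie in T_ybar S^n, a linear
   subspace of R^{n+1}; convexity in it is convexity in R^{n+1}) *)
Definition c_convex (Om : set 'rV[R]_n) (Os : set 'rV[R]_n.+1) : Prop :=
  forall yb, Os yb -> convex_rV [set - Dy_cost x yb | x in Om].

(* great circle through a with unit initial velocity u (u ⟂ a), arclength s *)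
Definition gcircle (a u : 'rV[R]_n.+1) (s : R) : 'rV[R]_n.+1 :=
  cos s *: a + sin s *: u.

Definition sdist (a b : 'rV[R]_n.+1) : R := acos (dotv a b).

(* geodesically convex: any two points are joined by a minimizing
   great-circle arc (length = spherical distance) lying in the set;
   for a = b the arc is the constant one. *)
Definition geod_convex (S : set 'rV[R]_n.+1) : Prop :=
  forall a b, S a -> S b ->
    a = b \/
    exists u : 'rV[R]_n.+1,
      [/\ dotv u u = 1, dotv u a = 0,
          gcircle a u (sdist a b) = b &
          forall s : R, 0 <= s <= sdist a b -> S (gcircle a u s)].

End Defs.

(* Main.v *)
Require Import Defs.
From HB Require Import structures.
From mathcomp Require Import all_boot all_order all_algebra.
From mathcomp Require Import all_classical all_reals all_analysis.
From mathcomp Require Import ring lra.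
Import Order.TTheory GRing.Theory Num.Theory.
Import numFieldNormedType.Exports.
Local Open Scope classical_set_scope.
Local Open Scope ring_scope.
Set Implicit Arguments. Unset Strict Implicit. Unset Printing Implicit Defensive.

Section Aux.
Variable R : realType.
Lemma derive_near (V : normedModType R) (f : V -> R) (a v : V) (q : R -> R) (L : R) :
  (\forall h \near 0^', h^-1 *: (f (h *: v + a) - f a) = q h) ->
  q h @[h --> 0^'] --> L -> 'D_v f a = L.
Proof.
move=> Hn Hq; rewrite /derive.
have H : (fun h : R => h^-1 *: ((f \o shift a) (h *: v) - f a)) @ 0^' --> L.
  apply: cvg_trans Hq; apply: near_eq_cvg.
  by apply: filterS Hn => h /= ->.
exact: (cvg_lim _ H).
Qed.

Lemma derive_lin (V : normedModType R) (f : V -> R) (a v : V) (L : R) :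
  (forall h, h != 0 -> f (h *: v + a) = f a + h * L) -> 'D_v f a = L.
Proof.
move=> Hf; apply: (@derive_near _ _ _ _ (fun=> L)); last exact: cvg_cst.
near=> h; have h0 : h != 0 by near: h; exact: nbhs_dnbhs_neq.
by rewrite Hf // addrC addKr /GRing.scale /= mulKf.
Unshelve. all: by end_near.
Qed.

Lemma dotvC k (u v : 'rV[R]_k) : dotv u v = dotv v u.
Proof. by apply: eq_bigr => i _; rewrite mulrC. Qed.
Lemma dotvDl k (u v w : 'rV[R]_k) : dotv (u + v) w = dotv u w + dotv v w.
Proof. by rewrite /dotv -big_split; apply: eq_bigr => i _; rewrite !mxE mulrDl. Qed.
Lemma dotvZl k a (u w : 'rV[R]_k) : dotv (a *: u) w = a * dotv u w.
Proof. by rewrite /dotv mulr_sumr; apply: eq_bigr => i _; rewrite !mxE mulrA. Qed.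
Lemma dotvNl k (u w : 'rV[R]_k) : dotv (- u) w = - dotv u w.
Proof. by rewrite -scaleN1r dotvZl mulN1r. Qed.
Lemma dotvDr k (u v w : 'rV[R]_k) : dotv w (u + v) = dotv w u + dotv w v.
Proof. by rewrite dotvC dotvDl; congr (_ + _); apply: dotvC. Qed.
Lemma dotvZr k a (u w : 'rV[R]_k) : dotv w (a *: u) = a * dotv w u.
Proof. by rewrite dotvC dotvZl dotvC. Qed.
Lemma dotvNr k (u w : 'rV[R]_k) : dotv w (- u) = - dotv w u.
Proof. by rewrite dotvC dotvNl dotvC. Qed.
Lemma dotv0l k (u : 'rV[R]_k) : dotv 0 u = 0.
Proof. by rewrite /dotv big1 // => i _; rewrite mxE mul0r. Qed.
Lemma dotv_delta k (j : 'I_k) (u : 'rV[R]_k) : dotv (delta_mx 0 j) u = u 0 j.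
Proof.
rewrite /dotv (bigD1 j) //= big1 ?addr0; first by rewrite mxE !eqxx mul1r.
by move=> i /negPf ij; rewrite mxE ij andbF mul0r.
Qed.
Lemma dotv_ge0 k (u : 'rV[R]_k) : 0 <= dotv u u.
Proof. by apply: sumr_ge0 => i _; rewrite -expr2 sqr_ge0. Qed.
Lemma dotv_eq0 k (u : 'rV[R]_k) : dotv u u = 0 -> u = 0.
Proof.
move=> /eqP; rewrite psumr_eq0 => [/allP H|i _]; last by rewrite -expr2 sqr_ge0.
apply/rowP => i; rewrite mxE; have := H i (mem_index_enum _).
by rewrite -expr2 sqrf_eq0 => /eqP.
Qed.

Variable n : nat.
Lemma dotv_split (a b : 'rV[R]_n.+1) :
  dotv a b = dotv (yfst a) (yfst b) + ylast a * ylast b.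
Proof. by rewrite /dotv big_ord_recr /=; congr (_ + _); apply: eq_bigr => i _; rewrite !mxE. Qed.
Lemma yfstD (a b : 'rV[R]_n.+1) : yfst (a + b) = yfst a + yfst b.
Proof. by apply/rowP => i; rewrite !mxE. Qed.
Lemma yfstZ k (a : 'rV[R]_n.+1) : yfst (k *: a) = k *: yfst a.
Proof. by apply/rowP => i; rewrite !mxE. Qed.
Lemma ylastD (a b : 'rV[R]_n.+1) : ylast (a + b) = ylast a + ylast b.
Proof. by rewrite /ylast !mxE. Qed.
Lemma ylastZ k (a : 'rV[R]_n.+1) : ylast (k *: a) = k * ylast a.
Proof. by rewrite /ylast !mxE. Qed.
Lemma yfst_dw (i : 'I_n) : yfst (delta_mx 0 (widen_ord (leqnSn n) i) : 'rV[R]_n.+1) = delta_mx 0 i.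
Proof.
apply/rowP => j; rewrite !mxE.
have -> : (widen_ord (leqnSn n) j == widen_ord (leqnSn n) i) = (j == i).
  by apply/eqP/eqP => [/(congr1 val)/= /val_inj|->].
by [].
Qed.
Lemma ylast_dw (i : 'I_n) : ylast (delta_mx 0 (widen_ord (leqnSn n) i) : 'rV[R]_n.+1) = 0.
Proof.
rewrite /ylast mxE eqxx /=; case: eqP => [/(congr1 val)/= H|//].
by have := ltn_ord i; rewrite -H ltnn.
Qed.
Lemma yfst_dmax : yfst (delta_mx 0 (@ord_max n) : 'rV[R]_n.+1) = 0.
Proof.
apply/rowP => j; rewrite !mxE eqxx /=; case: eqP => [/(congr1 val)/= H|//].
by have := ltn_ord j; rewrite H ltnn.
Qed.
Lemma ylast_dmax : ylast (delta_mx 0 (@ord_max n) : 'rV[R]_n.+1) = 1.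
Proof. by rewrite /ylast mxE !eqxx. Qed.
Lemma ord_caseS (j : 'I_n.+1) : j = ord_max \/ exists i : 'I_n, j = widen_ord (leqnSn n) i.
Proof.
case: (ltnP j n) => H; [right; exists (Ordinal H) | left]; apply/val_inj => //=.
by apply/eqP; rewrite eqn_leq H -ltnS ltn_ord.
Qed.
Lemma rv_ext (a b : 'rV[R]_n.+1) : yfst a = yfst b -> ylast a = ylast b -> a = b.
Proof.
move=> H1 H2; apply/rowP => j; case: (ord_caseS j) => [->|[i ->]] //.
by have := congr1 (fun v : 'rV[R]_n => v 0 i) H1; rewrite !mxE.
Qed.

Lemma Dx_costE (x : 'rV[R]_n) (yb : 'rV[R]_n.+1) : Dx_cost x yb = (ylast yb)^-1 *: yfst yb.
Proof.
apply/rowP => j; rewrite /Dx_cost /egrad !mxE; apply: derive_lin => h _.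
rewrite /cost dotvDl dotvZl dotv_delta mxE mulrDl; ring.
Qed.

Lemma Dy_yfst (x : 'rV[R]_n) (yb : 'rV[R]_n.+1) : ylast yb != 0 ->
  yfst (egrad (fun yb' => cost x yb') yb) = (ylast yb)^-1 *: x.
Proof.
move=> hc; apply/rowP => i; rewrite !mxE; apply: derive_lin => h _.
rewrite /cost yfstD ylastD yfstZ ylastZ yfst_dw ylast_dw mulr0 add0r.
rewrite dotvDr dotvZr dotvC dotv_delta mulrDl; ring.
Qed.

Lemma Dy_ylast (x : 'rV[R]_n) (yb : 'rV[R]_n.+1) : ylast yb != 0 ->
  ylast (egrad (fun yb' => cost x yb') yb) = - dotv x (yfst yb) / (ylast yb)^+2.
Proof.
move=> hc; rewrite /ylast /egrad mxE.
set c := yb 0 ord_max; set K := dotv x (yfst yb).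
apply: (@derive_near _ _ _ _ (fun h => - K * (c * (c + h))^-1)).
  have hc' : 0 < `|c| by rewrite normr_gt0.
  near=> h; have h0 : h != 0 by near: h; exact: nbhs_dnbhs_neq.
  have ch : c + h != 0.
    near: h; apply: nbhs_dnbhs; apply: filterS (nbhs0_lt hc') => h /= hh.
    apply/eqP => E; move: hh; have -> : h = - c by apply: (addrI c); rewrite E subrr.
    by rewrite normrN ltxx.
  rewrite /cost yfstD ylastD yfstZ ylastZ yfst_dmax ylast_dmax scaler0 add0r mulr1.
  rewrite /ylast -/c -/K.
  rewrite /GRing.scale /=; field; rewrite h0 ch /=.
  by move: hc; rewrite /ylast -/c => ->.
apply: cvg_within_filter.
have -> : - K / c ^+ 2 = - K * (c * (c + 0))^-1 by rewrite addr0 expr2.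
apply: cvgMl_tmp; apply: cvgV; first by rewrite addr0 mulf_neq0.
apply: cvgMl_tmp; apply: cvgD; [exact: cvg_cst|exact: cvg_id].
Unshelve. all: by end_near.
Qed.
End Aux.

Section Geo.
Variable R : realType.
Variable n : nat.
Local Notation V := 'rV[R]_n.+1.
Local Notation LH := (@lower_hemisphere R n).

Definition Pm (yb : V) : 'rV[R]_n := - ((ylast yb)^-1 *: yfst yb).

Lemma dotv_comb2 k (al be ga de : R) (a b : 'rV[R]_k) :
  dotv (al *: a + be *: b) (ga *: a + de *: b) =
  al * ga * dotv a a + (al * de + be * ga) * dotv a b + be * de * dotv b b.
Proof.
rewrite !dotvDl !dotvDr !dotvZl !dotvZr (dotvC b a); ring.
Qed.

Lemma yfst_Pm (z : V) : ylast z != 0 -> yfst z = - ylast z *: Pm z.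
Proof. by move=> hz; apply/rowP => j; rewrite !mxE; field. Qed.

Lemma Pm_inj (z g : V) : LH z -> LH g -> Pm z = Pm g -> z = g.
Proof.
move=> [Sz cz] [Sg cg] E.
have hz : ylast z != 0 by rewrite lt_eqF.
have hg : ylast g != 0 by rewrite lt_eqF.
have Ez := yfst_Pm hz; have Eg := yfst_Pm hg.
move: Sz Sg; rewrite /sphere /= !dotv_split Ez Eg E !dotvZl !dotvZr => Sz Sg.
have pp := dotv_ge0 (Pm g).
have ec : ylast z = ylast g by nra.
by apply: rv_ext => //; rewrite Ez Eg E ec.
Qed.
Lemma LH_ne0 (a : V) : LH a -> ylast a != 0.
Proof. by case=> _ h; rewrite lt_eqF. Qed.

Lemma dot_range (a b : V) : LH a -> LH b -> a != b -> -1 < dotv a b < 1.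
Proof.
move=> [Sa ca] [Sb cb] ab; rewrite /sphere /= in Sa Sb.
apply/andP; split; rewrite ltNge; apply/negP => H.
- have E : dotv (a + b) (a + b) = 0.
    apply/le_anti; rewrite dotv_ge0 andbT.
    rewrite dotvDl !dotvDr Sa Sb (dotvC b a); lra.
  have := congr1 (@ylast R n) (dotv_eq0 E); rewrite ylastD /ylast mxE => E2.
  move: ca cb; rewrite /ylast; lra.
- have E : dotv (a - b) (a - b) = 0.
    apply/le_anti; rewrite dotv_ge0 andbT.
    rewrite dotvDl !dotvDr !dotvNl !dotvNr Sa Sb (dotvC b a); lra.
  by move: ab; rewrite -subr_eq0 (dotv_eq0 E) eqxx.
Qed.
Lemma angle_facts (a b : V) : LH a -> LH b -> a != b ->
  [/\ 0 < sdist a b < pi, cos (sdist a b) = dotv a b & 0 < sin (sdist a b)].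
Proof.
move=> La Lb ab; have /andP[k1 k2] := dot_range La Lb ab.
have thr : 0 < sdist a b < pi.
  by rewrite /sdist acos_gt0 ?acos_ltpi ?k1 ?k2 ?(ltW k1) ?(ltW k2).
split => //; last exact: sin_gt0_pi.
by rewrite /sdist acosK // in_itv /= (ltW k1) (ltW k2).
Qed.

Lemma conv_geod (Os : set V) : Os `<=` LH ->
  convex_rV [set Pm yb | yb in Os] -> geod_convex Os.
Proof.
move=> sub Hc a b Oa Ob; case: (eqVneq a b) => [->|ab]; [by left|right].
have La := sub a Oa; have Lb := sub b Ob.
have [thr cth sth] := angle_facts La Lb ab.
move: La Lb => [Sa ca] [Sb cb]; rewrite /sphere /= in Sa Sb.
set th := sdist a b in thr cth sth *; set k := dotv a b in cth *.
set st := sin th in sth *.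
have st0 : st != 0 by rewrite gt_eqF.
have E2 : st ^+ 2 = 1 - k ^+ 2 by rewrite /st -cth sin2cos2.
set u := (- k / st) *: a + st^-1 *: b.
have uu : dotv u u = 1.
  rewrite dotv_comb2 Sa Sb -/k.
  transitivity ((1 - k ^+ 2) / st ^+ 2); first by field.
  by rewrite -E2 divff // expf_neq0.
have ua : dotv u a = 0.
  by rewrite dotvDl !dotvZl Sa (dotvC b a) -/k; field.
exists u; split => //.
  by apply/rowP => j; rewrite /gcircle -/th !mxE cth -/st; field.
move=> s /andP[s0 sth'].
have thpi : th <= pi by case/andP: thr => _ /ltW.
have sin_s : 0 <= sin s by apply: sin_ge0_pi; rewrite s0 (le_trans sth' thpi).
set al := cos s - sin s * k / st; set be := sin s / st.
have be0 : 0 <= be by rewrite divr_ge0 // ltW.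
have al0 : 0 <= al.
  have : 0 <= sin (th - s).
    by apply: sin_ge0_pi; rewrite subr_ge0 sth' /=; lra.
  rewrite sinB -/st cth => h.
  have -> : al = (st * cos s - k * sin s) / st by rewrite /al; field.
  by rewrite divr_ge0 // ltW.
set g := gcircle a u s.
have gE : g = al *: a + be *: b.
  by apply/rowP => j; rewrite /g /gcircle !mxE /al /be; field.
have gg : dotv g g = 1.
  rewrite /g /gcircle dotv_comb2 Sa uu (dotvC a u) ua.
  have := cos2Dsin2 s; rewrite !expr2 => h; lra.
have albe : 0 < al + be.
  rewrite lt_def addr_ge0 // andbT; apply/negP => /eqP H0.
  have al00 : al = 0 by lra.
  have be00 : be = 0 by lra.
  by move: gg; rewrite gE al00 be00 !scale0r addr0 dotv0l => /eqP; rewrite eq_sym oner_eq0.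
have cg : ylast g = al * ylast a + be * ylast b by rewrite gE ylastD !ylastZ.
have cg0 : ylast g < 0.
  rewrite cg; case: (lerP (ylast a) (ylast b)) => hab.
    have h1 : 0 <= al * (ylast b - ylast a) by rewrite mulr_ge0 // subr_ge0.
    have h2 : 0 < (al + be) * (- ylast b) by rewrite mulr_gt0 // oppr_gt0.
    lra.
  have h1 : 0 <= be * (ylast a - ylast b) by rewrite mulr_ge0 // subr_ge0 ltW.
  have h2 : 0 < (al + be) * (- ylast a) by rewrite mulr_gt0 // oppr_gt0.
  lra.
have Lg : LH g by split.
set D := - ylast g.
have hD : 0 < D by rewrite /D oppr_gt0.
set lam := be * (- ylast b) / D.
have lam01 : 0 <= lam <= 1.
  apply/andP; split; first by rewrite divr_ge0 ?(ltW hD) //; nra.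
  by rewrite ler_pdivrMr // mul1r /D cg; nra.
have [z Oz Ez] := Hc _ _ (imageP Pm Oa) (imageP Pm Ob) lam lam01.
have -> : g = z; last by [].
apply: (Pm_inj Lg (sub z Oz)); rewrite Ez.
move: hD; rewrite /lam /D cg gE => hD.
have ha : ylast a != 0 by rewrite lt_eqF.
have hb : ylast b != 0 by rewrite lt_eqF.
move: ha hb hD; rewrite /Pm /ylast => ha hb hD.
have hD0 : al * a 0 ord_max + be * b 0 ord_max != 0 by rewrite -oppr_eq0 gt_eqF.
apply/rowP => j; rewrite !mxE.
by field; rewrite ha hb hD0.
Qed.
Lemma geod_conv (Os : set V) : Os `<=` LH ->
  geod_convex Os -> convex_rV [set Pm yb | yb in Os].
Proof.
move=> sub Hg _ _ [a Oa <-] [b Ob <-] t /andP[t0 t1].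
case: (eqVneq a b) => [<-|ab].
  by exists a => //; apply/rowP => j; rewrite !mxE; ring.
case: (Hg a b Oa Ob) => [abE|[u [uu ua gb arc]]]; first by rewrite abE eqxx in ab.
have La := sub a Oa; have Lb := sub b Ob.
have [thr cth sth] := angle_facts La Lb ab.
move: La Lb => [Sa ca] [Sb cb]; rewrite /sphere /= in Sa Sb.
set th := sdist a b in thr cth sth gb arc *; set k := dotv a b in cth *.
set st := sin th in sth *.
have st0 : st != 0 by rewrite gt_eqF.
have E2 : st ^+ 2 + k ^+ 2 = 1 by rewrite /st -cth addrC cos2Dsin2.
have ha : ylast a != 0 by rewrite lt_eqF.
have hb : ylast b != 0 by rewrite lt_eqF.
set mu := - (1 - t) / ylast a; set nu := - t / ylast b.
have mu0 : 0 <= mu by rewrite /mu mulr_le0 // ?oppr_le0 ?subr_ge0 // invr_le0 ltW.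
have nu0 : 0 <= nu by rewrite /nu mulr_le0 // ?oppr_le0 // invr_le0 ltW.
set w := mu *: a + nu *: b.
have cw : ylast w = -1.
  by rewrite ylastD !ylastZ /mu /nu; field; rewrite ?ha ?hb.
have ww : 0 < dotv w w.
  rewrite lt_def dotv_ge0 andbT; apply/negP => /eqP /dotv_eq0 w0.
  by move: cw; rewrite w0 /ylast mxE => /eqP; rewrite eq_sym oppr_eq0 oner_eq0.
set r := Num.sqrt (dotv w w).
have r0 : 0 < r by rewrite sqrtr_gt0.
have rr : r ^+ 2 = dotv w w by rewrite sqr_sqrtr // ltW.
have r0' : r != 0 by rewrite gt_eqF.
set al := r^-1 * (mu + nu * k); set be := r^-1 * (nu * st).
have be0 : 0 <= be by apply: mulr_ge0; [rewrite invr_ge0 ltW | apply: mulr_ge0 => //; exact: ltW].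
have bj : forall j, b 0 j = k * a 0 j + st * u 0 j.
  by move=> j; rewrite -gb /gcircle !mxE cth.
set wh := r^-1 *: w.
have whE : wh = al *: a + be *: u.
  by apply/rowP => j; rewrite !mxE bj /al /be; field.
have ww1 : dotv wh wh = 1.
  by rewrite /wh dotvZl dotvZr -rr; field.
have au : dotv a u = 0 by rewrite dotvC.
have albe : al ^+ 2 + be ^+ 2 = 1.
  by move: ww1; rewrite whE dotv_comb2 Sa uu au !expr2; lra.
have alr : -1 <= al <= 1 by apply/andP; split; nra.
set ph := acos al.
have cph : cos ph = al by rewrite acosK // in_itv /=.
have sph : sin ph = be.
  have -> : sin ph = Num.sqrt (1 - al ^+ 2) by rewrite sin_acos.
  have -> : 1 - al ^+ 2 = be ^+ 2 by lra.
  by rewrite sqrtr_sqr ger0_norm.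
have ph0 : 0 <= ph by exact: acos_ge0.
have phpi : ph <= pi by exact: acos_lepi.
have key : al * st - be * k = r^-1 * mu * st by rewrite /al /be; ring.
have phth : ph <= th.
  rewrite leNgt; apply/negP => H.
  have : cos ph < cos th.
    rewrite ltr_cos // in_itv /= ?ph0 ?phpi // (ltW (proj1 (andP thr))).
    by case/andP: thr => _ /ltW ->.
  rewrite cph cth => H2.
  have : 0 <= r^-1 * mu * st.
    by apply: mulr_ge0; [apply: mulr_ge0 => //; rewrite invr_ge0 ltW|exact: ltW].
  rewrite -key => H3.
  case: (lerP 0 k) => hk.
    have hal : 0 <= al.
      rewrite leNgt; apply/negP => hal.
      have : al * st < 0 by rewrite pmulr_llt0.
      have : 0 <= be * k by rewrite mulr_ge0.
      lra.
    have h1 : al ^+ 2 < k ^+ 2 by rewrite ltr_pXn2r // ltW.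
    have h2 : st < be.
      by rewrite -(ltr_pXn2r (n := 2)) ?nnegrE ?be0 ?(ltW sth) //; lra.
    have : al * st <= k * st by rewrite ler_pM2r // ltW.
    have : k * st < k * be.
      by rewrite ltr_pM2l // (le_lt_trans hal H2).
    lra.
  have h1 : k ^+ 2 < al ^+ 2.
    by nra.
  have h2 : be <= st.
    by rewrite -(ler_pXn2r (n := 2)) ?nnegrE ?be0 ?(ltW sth) //; lra.
  have : al * st < k * st by rewrite ltr_pM2r.
  have : k * st <= k * be by rewrite ler_nM2l.
  lra.
have Owh : Os wh.
  have := arc ph; rewrite ph0 phth => /(_ isT).
  by rewrite /gcircle cph sph -whE.
exists wh => //.
apply/rowP => j; rewrite /Pm /wh /w !mxE.
move: ha hb cw; rewrite /ylast /w /mu /nu !mxE => ha hb cw.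
rewrite /ylast cw.
by field; rewrite ?ha ?hb ?r0' ?oppr_eq0 ?oner_eq0.
Qed.
End Geo.

Section P2.
Variable R : realType.
Variable n : nat.
Local Notation V := 'rV[R]_n.+1.
Local Notation LH := (@lower_hemisphere R n).

Lemma yfstN (a : V) : yfst (- a) = - yfst a.
Proof. by apply/rowP => i; rewrite !mxE. Qed.
Lemma ylastN (a : V) : ylast (- a) = - ylast a.
Proof. by rewrite /ylast !mxE. Qed.

Lemma Dy_costE (x : 'rV[R]_n) (yb : V) : ylast yb != 0 ->
  Dy_cost x yb = egrad (fun yb' => cost x yb') yb.
Proof.
move=> hc; rewrite /Dy_cost; cbv zeta.
have -> : dotv (egrad (fun yb' => cost x yb') yb) yb = 0.
  by rewrite dotv_split Dy_yfst // Dy_ylast // dotvZl; field.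
by rewrite scale0r subr0.
Qed.

Lemma F_fst (x : 'rV[R]_n) (yb : V) : ylast yb != 0 ->
  yfst (- Dy_cost x yb) = - ((ylast yb)^-1 *: x).
Proof. by move=> hc; rewrite yfstN Dy_costE // Dy_yfst. Qed.

Lemma F_last (x : 'rV[R]_n) (yb : V) : ylast yb != 0 ->
  ylast (- Dy_cost x yb) = dotv x (yfst yb) / (ylast yb) ^+ 2.
Proof. by move=> hc; rewrite ylastN Dy_costE // Dy_ylast // mulNr opprK. Qed.

Lemma F_lin (a b : 'rV[R]_n) (yb : V) t : ylast yb != 0 ->
  - Dy_cost ((1 - t) *: a + t *: b) yb =
  (1 - t) *: (- Dy_cost a yb) + t *: (- Dy_cost b yb).
Proof.
move=> hc.
have fa := F_fst a hc; have la := F_last a hc.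
have fb := F_fst b hc; have lb := F_last b hc.
have fc := F_fst ((1 - t) *: a + t *: b) hc; have lc := F_last ((1 - t) *: a + t *: b) hc.
move: (- Dy_cost a yb) (- Dy_cost b yb) (- Dy_cost ((1 - t) *: a + t *: b) yb) fa la fb lb fc lc.
move=> A B C fa la fb lb fc lc.
apply: rv_ext.
  rewrite yfstD !yfstZ fa fb fc; apply/rowP => j; rewrite !mxE; ring.
rewrite ylastD !ylastZ la lb lc dotvDl !dotvZl; ring.
Qed.

Lemma F_inj (a b : 'rV[R]_n) (yb : V) : ylast yb != 0 ->
  - Dy_cost a yb = - Dy_cost b yb -> a = b.
Proof.
move=> hc E; have := F_fst a hc; rewrite E F_fst // => H.
apply/rowP => j; have := congr1 (fun v : 'rV[R]_n => v 0 j) H; rewrite !mxE => h.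
by apply: (mulfI (invr_neq0 hc)); apply: oppr_inj.
Qed.

Lemma part2 (Om : set 'rV[R]_n) (Os : set V) : Os !=set0 -> Os `<=` LH ->
  (c_convex Om Os <-> convex_rV Om).
Proof.
move=> [y0 Oy0] sub; split => [Hc | Hconv].
  have hc : ylast y0 != 0 by case: (sub y0 Oy0) => _ h; rewrite lt_eqF.
  move=> a b Oa Ob t ht.
  have [z Oz Ez] := Hc y0 Oy0 _ _ (imageP (fun x => - Dy_cost x y0) Oa)
    (imageP (fun x => - Dy_cost x y0) Ob) t ht.
  by rewrite -(F_inj hc (etrans Ez (esym (F_lin a b t hc)))).
move=> yb Oyb _ _ [a Oa <-] [b Ob <-] t ht.
have hc : ylast yb != 0 by case: (sub yb Oyb) => _ h; rewrite lt_eqF.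
exists ((1 - t) *: a + t *: b); first exact: Hconv.
exact: F_lin.
Qed.

Theorem proposition4p6' :
  (forall (Om : set 'rV[R]_n) (Os : set 'rV[R]_n.+1),
      Om !=set0 -> Os `<=` @lower_hemisphere R n ->
      (cstar_convex Om Os <-> geod_convex Os)) /\
  (forall (Om : set 'rV[R]_n) (Os : set 'rV[R]_n.+1),
      Os !=set0 -> Os `<=` @lower_hemisphere R n ->
      (c_convex Om Os <-> convex_rV Om)).
Proof.
split; last exact: part2.
move=> Om Os [x0 Ox0] sub.
have E : forall x, [set - Dx_cost x yb | yb in Os] = [set Pm yb | yb in Os].
  move=> x; apply/seteqP; split => _ [yb Oyb <-]; exists yb => //;
  by rewrite Dx_costE.
split => [Hc | Hg].
  by apply: conv_geod sub _; rewrite -(E x0); exact: Hc x0 Ox0.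
by move=> x _; rewrite E; exact: geod_conv sub Hg.
Qed.
End P2.

Unset Implicit Arguments.

Theorem proposition4p6 (R : realType) (n : nat) :
  (forall (Om : set 'rV[R]_n) (Os : set 'rV[R]_n.+1),
      Om !=set0 -> Os `<=` @lower_hemisphere R n ->
      (cstar_convex Om Os <-> geod_convex Os)) /\
  (forall (Om : set 'rV[R]_n) (Os : set 'rV[R]_n.+1),
      Os !=set0 -> Os `<=` @lower_hemisphere R n ->
      (c_convex Om Os <-> convex_rV Om)).
Proof. exact: (@proposition4p6' R n). Qed.
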